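(* Let $(M,g)$ be an $n$-dimensional pseudo-Riemannian manifold and $T$ a Killing tensor (respectively, a traceless conformal tensor). Then: (i) if $x,y$ are eigenvectors of $T$ in the eigenspace $E_\rho$ of the eigenvalue function $\rho$, then $$(T-\rho g)\{x,y\}=g(x,y)\,s+g(s,x)\,y+g(s,y)\,x,\qquad s\equiv\mathrm d\rho-t,$$ where $t=0$ (respectively, $t=\frac{2}{n+2}\nabla\cdot T$); (ii) if $x,y,z$ are eigenvectors corresponding to three different eigenvalues, then $T(x,\{y,z\})+T(z,\{x,y\})+T(y,\{z,x\})=0$.
   Context: $\nabla$ is the Levi-Civita connection; vectors and 1-forms are identified via $g$; $T$ is viewed both as a bilinear form and as an endomorphism. $\{x,y\}=\nabla_xy+\nabla_yx$. $(\nabla\cdot T)_b=\nabla^aT_{ab}$. Killing tensor: symmetric $K$ with $\nabla_{(a}K_{bc)}=0$. Conformal tensor: traceless symmetric $T$ with $\nabla_{(a}T_{bc)}=g_{(ab}t_{c)}$ for some 1-form $t$ (necessarily $t=\frac2{n+2}\nabla\cdot T$). Eigenvectors are vector fields $x$ with $T(x)=\rho x$ for the eigenvalue function $\rho$. *)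

(* Defs.v *)
(* Local coordinate formalization:
   the manifold is represented by an open coordinate domain U of R^n
   (points are row vectors 'rV[R]_n); all tensors are given by their
   component functions in these coordinates. *)
From HB Require Import structures.
From mathcomp Require Import all_boot all_order all_algebra.
From mathcomp Require Import all_classical all_reals all_analysis.
Set Implicit Arguments. Unset Strict Implicit. Unset Printing Implicit Defensive.
Import Order.TTheory GRing.Theory Num.Theory.
Import numFieldNormedType.Exports.
Local Open Scope classical_set_scope.
Local Open Scope ring_scope.

Section Coords.
Variables (R : realType) (n : nat).

Definition point := 'rV[R]_n.
(* vector fields: component i of X at p is X p 0 i (upper index) *)
Definition vfield := point -> 'rV[R]_n.
(* (0,2)-tensor fields: component T p i j (lower indices) *)
Definition tfield := point -> 'M[R]_n.

Definition partial (f : point -> R) (k : 'I_n) (p : point) : R :=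
  'D_(delta_mx 0 k) f p.

Definition ginv (g : tfield) (p : point) : 'M[R]_n := invmx (g p).

Definition christoffel (g : tfield) (p : point) (i j k : 'I_n) : R :=
  2^-1 * \sum_(l < n) ginv g p i l *
    (partial (fun q => g q l k) j p + partial (fun q => g q l j) k p
     - partial (fun q => g q j k) l p).

Definition cov (g : tfield) (X Y : vfield) (p : point) : 'rV[R]_n :=
  \row_i (\sum_(j < n) X p 0 j * partial (fun q => Y q 0 i) j p
          + \sum_(j < n) \sum_(k < n) christoffel g p i j k * X p 0 j * Y p 0 k).

(* {X,Y} = nabla_X Y + nabla_Y X *)
Definition sbracket (g : tfield) (X Y : vfield) (p : point) : 'rV[R]_n :=
  cov g X Y p + cov g Y X p.

(* (nabla T)_{abc} = nabla_a T_{bc} *)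
Definition nablaT (g T : tfield) (p : point) (a b c : 'I_n) : R :=
  partial (fun q => T q b c) a p
  - \sum_(l < n) (christoffel g p l a b * T p l c + christoffel g p l a c * T p b l).

Definition divT (g T : tfield) (p : point) : 'rV[R]_n :=
  \row_b \sum_(a < n) \sum_(c < n) ginv g p a c * nablaT g T p c a b.

Definition bform (A : 'M[R]_n) (u v : 'rV[R]_n) : R := (u *m A *m v^T) 0 0.

(* T viewed as an endomorphism: T(x)^i = g^{ik} T_{kj} x^j (row-vector form) *)
Definition endo (g T : tfield) (p : point) (x : 'rV[R]_n) : 'rV[R]_n :=
  x *m (T p)^T *m (ginv g p)^T.

Definition pseudo_riemannian (g : tfield) (U : set point) : Prop :=
  forall p, U p -> (g p)^T = g p /\ g p \in unitmx.

Definition diff_fun (f : point -> R) (U : set point) : Prop :=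
  forall p, U p -> differentiable f p.
Definition diff_tfield (T : tfield) (U : set point) : Prop :=
  forall i j, diff_fun (fun q => T q i j) U.
Definition diff_vfield (X : vfield) (U : set point) : Prop :=
  forall i, diff_fun (fun q => X q 0 i) U.

Definition killing_tensor (g T : tfield) (U : set point) : Prop :=
  forall p, U p -> (T p)^T = T p /\
    forall a b c, nablaT g T p a b c + nablaT g T p b c a + nablaT g T p c a b = 0.

Definition conformal_tensor (g T : tfield) (U : set point) : Prop :=
  exists t : point -> 'rV[R]_n,
  forall p, U p -> (T p)^T = T p /\
    \sum_(a < n) \sum_(b < n) ginv g p a b * T p a b = 0 /\
    forall a b c, nablaT g T p a b c + nablaT g T p b c a + nablaT g T p c a b
                  = g p a b * t p 0 c + g p b c * t p 0 a + g p c a * t p 0 b.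

Definition eigvec (g T : tfield) (rho : point -> R) (x : vfield) (U : set point)
  : Prop := forall p, U p -> endo g T p (x p) = rho p *: x p.

Definition drho (rho : point -> R) (p : point) : 'rV[R]_n :=
  \row_k partial rho k p.

End Coords.

(* Main.v *)
Require Import Defs.
From HB Require Import structures.
From mathcomp Require Import all_boot all_order all_algebra.
From mathcomp Require Import all_classical all_reals all_analysis.
From mathcomp Require Import ring lra.
Set Implicit Arguments. Unset Strict Implicit. Unset Printing Implicit Defensive.
Import Order.TTheory GRing.Theory Num.Theory.
Import numFieldNormedType.Exports.
Local Open Scope classical_set_scope.
Local Open Scope ring_scope.
Section Deriv.
Variables (R : realType) (n : nat).
Implicit Types (f h : 'rV[R]_n -> R) (U : set 'rV[R]_n).

Lemma nearU U p : open U -> U p -> \forall q \near p, U q.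
Proof. by move=> oU Up; apply: open_nbhs_nbhs. Qed.

Lemma partial_eq_on U f h k p : open U -> U p ->
  (forall q, U q -> f q = h q) -> partial f k p = partial h k p.
Proof.
move=> oU Up E; rewrite /partial; apply: near_eq_derive.
near=> q; apply: E; near: q; exact: nearU oU Up.
Unshelve. all: by end_near.
Qed.

Lemma partial0_on U f k p : open U -> U p ->
  (forall q, U q -> f q = 0) -> partial f k p = 0.
Proof.
move=> oU Up E; rewrite (@partial_eq_on U f (cst 0) k p oU Up) //.
by rewrite /partial derive_cst.
Qed.

Lemma derivable_big (I : Type) (r : seq I) (P : pred I) (F : I -> 'rV[R]_n -> R) p v :
  (forall i, P i -> derivable (F i) p v) ->
  derivable (fun q => \sum_(i <- r | P i) F i q) p v.
Proof.
move=> dF; elim: r => [|a r IH].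
  have -> : (fun q => \sum_(i <- [::] | P i) F i q) = cst 0.
    by apply: funext => q; rewrite big_nil.
  exact: derivable_cst.
case Pa: (P a).
  have -> : (fun q => \sum_(i <- a :: r | P i) F i q) =
     F a + (fun q => \sum_(i <- r | P i) F i q).
    by apply: funext => q; rewrite big_cons Pa.
  by apply: derivableD => //; exact: dF.
have -> : (fun q => \sum_(i <- a :: r | P i) F i q) =
     (fun q => \sum_(i <- r | P i) F i q).
  by apply: funext => q; rewrite big_cons Pa.
exact: IH.
Qed.

Lemma derive_big (I : Type) (r : seq I) (P : pred I) (F : I -> 'rV[R]_n -> R) p v :
  (forall i, P i -> derivable (F i) p v) ->
  'D_v (fun q => \sum_(i <- r | P i) F i q) p = \sum_(i <- r | P i) 'D_v (F i) p.
Proof.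
move=> dF; elim: r => [|a r IH].
  have -> : (fun q => \sum_(i <- [::] | P i) F i q) = cst 0.
    by apply: funext => q; rewrite big_nil.
  by rewrite derive_cst big_nil.
case Pa: (P a).
  have -> : (fun q => \sum_(i <- a :: r | P i) F i q) =
     F a + (fun q => \sum_(i <- r | P i) F i q).
    by apply: funext => q; rewrite big_cons Pa.
  rewrite deriveD ?IH ?big_cons ?Pa //; first exact: dF.
  exact: derivable_big.
have -> : (fun q => \sum_(i <- a :: r | P i) F i q) =
     (fun q => \sum_(i <- r | P i) F i q).
  by apply: funext => q; rewrite big_cons Pa.
by rewrite IH big_cons Pa.
Qed.

Lemma derivable_prod (I : Type) (r : seq I) (P : pred I) (F : I -> 'rV[R]_n -> R) p v :
  (forall i, P i -> derivable (F i) p v) ->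
  derivable (fun q => \prod_(i <- r | P i) F i q) p v.
Proof.
move=> dF; elim: r => [|a r IH].
  have -> : (fun q => \prod_(i <- [::] | P i) F i q) = cst 1.
    by apply: funext => q; rewrite big_nil.
  exact: derivable_cst.
case Pa: (P a).
  have -> : (fun q => \prod_(i <- a :: r | P i) F i q) =
     F a * (fun q => \prod_(i <- r | P i) F i q).
    by apply: funext => q; rewrite big_cons Pa.
  by apply: derivableM => //; exact: dF.
have -> : (fun q => \prod_(i <- a :: r | P i) F i q) =
     (fun q => \prod_(i <- r | P i) F i q).
  by apply: funext => q; rewrite big_cons Pa.
exact: IH.
Qed.

Lemma derivable_mulc f c p v : derivable f p v -> derivable (fun q => c * f q) p v.
Proof.
move=> df; have -> : (fun q => c * f q) = cst c * f by apply: funext.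
by apply: derivableM => //; exact: derivable_cst.
Qed.

Lemma derivable_det m (M : 'rV[R]_n -> 'M[R]_m) p v :
  (forall i j, derivable (fun q => M q i j) p v) ->
  derivable (fun q => \det (M q)) p v.
Proof.
move=> dM; rewrite /determinant; apply: derivable_big => s _.
apply: derivable_mulc; apply: derivable_prod => i _; exact: dM.
Qed.

End Deriv.

Section Part.
Variables (R : realType) (n : nat).
Implicit Types (f h : 'rV[R]_n -> R) (U : set 'rV[R]_n).

Definition dvb f k p := derivable f p (delta_mx 0 k : 'rV[R]_n).

Lemma dvb_diff U f k p : diff_fun f U -> U p -> dvb f k p.
Proof. by move=> df Up; apply: diff_derivable; exact: df. Qed.

Lemma dvbM f h k p : dvb f k p -> dvb h k p -> dvb (fun q => f q * h q) k p.
Proof. by move=> df dh; apply: (derivableM df dh). Qed.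
Lemma dvbD f h k p : dvb f k p -> dvb h k p -> dvb (fun q => f q + h q) k p.
Proof. by move=> df dh; apply: (derivableD df dh). Qed.
Lemma dvbB f h k p : dvb f k p -> dvb h k p -> dvb (fun q => f q - h q) k p.
Proof. by move=> df dh; apply: (derivableB df dh). Qed.
Lemma dvbV f k p : f p != 0 -> dvb f k p -> dvb (fun q => (f q)^-1) k p.
Proof. by move=> f0 df; apply: derivableV. Qed.
Lemma dvb_sum m (F : 'I_m -> 'rV[R]_n -> R) k p : (forall i, dvb (F i) k p) ->
  dvb (fun q => \sum_(i < m) F i q) k p.
Proof. by move=> dF; apply: derivable_big => i _; exact: dF. Qed.

Lemma partialM f h k p : dvb f k p -> dvb h k p ->
  partial (fun q => f q * h q) k p = f p * partial h k p + h p * partial f k p.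
Proof. by move=> df dh; rewrite /partial (deriveM df dh). Qed.
Lemma partialD f h k p : dvb f k p -> dvb h k p ->
  partial (fun q => f q + h q) k p = partial f k p + partial h k p.
Proof. by move=> df dh; rewrite /partial (deriveD df dh). Qed.
Lemma partialB f h k p : dvb f k p -> dvb h k p ->
  partial (fun q => f q - h q) k p = partial f k p - partial h k p.
Proof. by move=> df dh; rewrite /partial (deriveB df dh). Qed.
Lemma partial_sum m (F : 'I_m -> 'rV[R]_n -> R) k p : (forall i, dvb (F i) k p) ->
  partial (fun q => \sum_(i < m) F i q) k p = \sum_(i < m) partial (F i) k p.
Proof. by move=> dF; rewrite /partial derive_big // => i _; exact: dF. Qed.
Lemma partialV f k p : f p != 0 -> dvb f k p ->
  partial (fun q => (f q)^-1) k p = - (f p) ^- 2 * partial f k p.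
Proof. by move=> f0 df; rewrite /partial deriveV. Qed.
Lemma partial_cst (c : R) k p : partial (fun _ : 'rV[R]_n => c) k p = 0.
Proof. by rewrite /partial derive_cst. Qed.

End Part.

Section Geo.
Variables (R : realType) (n : nat).
Local Notation V := 'rV[R]_n.
Local Notation M := 'M[R]_n.

Definition dM (F : V -> M) k p : M := \matrix_(i, j) partial (fun q => F q i j) k p.
Definition dV (X : V -> V) k p : V := \row_j partial (fun q => X q 0 j) k p.
Definition DM (F : V -> M) (u : V) p : M := \sum_k u 0 k *: dM F k p.
Definition DV (X : V -> V) (u : V) p : V := \sum_k u 0 k *: dV X k p.
Definition Ds (f : V -> R) (u : V) p : R := \sum_k u 0 k * partial f k p.
Definition Gma (g : V -> M) a p : M := \matrix_(b, l) christoffel g p l a b.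
Definition Gm (g : V -> M) (u : V) p : M := \sum_a u 0 a *: Gma g a p.
Definition NTa (g T : V -> M) a p : M := \matrix_(b, c) nablaT g T p a b c.
Definition NT (g T : V -> M) (u : V) p : M := \sum_a u 0 a *: NTa g T a p.

Lemma bformE (A : M) (u v : V) :
  bform A u v = \sum_i \sum_j u 0 i * A i j * v 0 j.
Proof.
rewrite /bform !mxE; under eq_bigr do rewrite !mxE big_distrl /=.
by rewrite exchange_big.
Qed.

Lemma cov_eq g X Y p : cov g X Y p = DV Y (X p) p + Y p *m Gm g (X p) p.
Proof.
apply/rowP => i; rewrite !mxE summxE; congr (_ + _).
  by apply: eq_bigr => j _; rewrite !mxE.
under [RHS]eq_bigr do rewrite summxE big_distrr /=.
rewrite [RHS]exchange_big /=; apply: eq_bigr => j _; apply: eq_bigr => k _.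
by rewrite !mxE; ring.
Qed.

Lemma NTa_eq g T a p :
  NTa g T a p = dM T a p - Gma g a p *m T p - T p *m (Gma g a p)^T.
Proof.
apply/matrixP => b c; rewrite !mxE /nablaT big_split /= opprD addrA; congr (_ - _ - _).
  by apply: eq_bigr => l _; rewrite !mxE.
by apply: eq_bigr => l _; rewrite !mxE mulrC.
Qed.

Lemma trmx_sumZ m (c : 'I_m -> R) (A : 'I_m -> M) :
  (\sum_a c a *: A a)^T = \sum_a c a *: (A a)^T.
Proof. by apply/matrixP => i j; rewrite !mxE !summxE; apply: eq_bigr => a _; rewrite !mxE. Qed.

Lemma NT_eq g T u p :
  NT g T u p = DM T u p - Gm g u p *m T p - T p *m (Gm g u p)^T.
Proof.
rewrite /NT /DM /Gm mulmx_suml trmx_sumZ mulmx_sumr -!sumrB.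
apply: eq_bigr => a _; rewrite NTa_eq -scalemxAl -scalemxAr.
by rewrite !scalerBr.
Qed.

End Geo.

Section Compat.
Variables (R : realType) (n : nat).
Local Notation V := 'rV[R]_n.
Local Notation M := 'M[R]_n.

Lemma ginvT (g : V -> M) p : (g p)^T = g p -> (ginv g p)^T = ginv g p.
Proof. by move=> HT; rewrite /ginv trmx_inv HT. Qed.

Lemma trZ m k (c : R) (A : 'M[R]_(m, k)) : (c *: A)^T = c *: A^T.
Proof. by apply/matrixP => i j; rewrite !mxE. Qed.

Lemma compat_a (g : V -> M) a p : (g p)^T = g p -> g p \in unitmx ->
  (forall k i j, partial (fun q => g q i j) k p = partial (fun q => g q j i) k p) ->
  dM g a p = Gma g a p *m g p + g p *m (Gma g a p)^T.
Proof.
move=> HT HU HS.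
set Pa : M := \matrix_(m, b) (partial (fun q => g q m b) a p
   + partial (fun q => g q m a) b p - partial (fun q => g q a b) m p).
have EG : Gma g a p = 2^-1 *: (ginv g p *m Pa)^T.
  apply/matrixP => b l; rewrite !mxE /christoffel; congr (_ * _).
  by apply: eq_bigr => m _; rewrite !mxE.
have H1 : ginv g p *m g p = 1%:M by rewrite /ginv mulVmx.
have H2 : g p *m ginv g p = 1%:M by rewrite /ginv mulmxV.
rewrite EG -scalemxAl trmx_mul (ginvT HT) -mulmxA H1 mulmx1.
rewrite trZ trmx_mul trmxK (ginvT HT) -scalemxAr mulmxA H2 mul1mx.
apply/matrixP => b c; rewrite !mxE.
rewrite (HS a c b) (HS b c a) (HS c a b).
by field.
Qed.

Lemma compat (g : V -> M) u p : (g p)^T = g p -> g p \in unitmx ->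
  (forall k i j, partial (fun q => g q i j) k p = partial (fun q => g q j i) k p) ->
  DM g u p = Gm g u p *m g p + g p *m (Gm g u p)^T.
Proof.
move=> HT HU HS; rewrite /DM /Gm trmx_sumZ mulmx_suml mulmx_sumr -big_split /=.
apply: eq_bigr => a _; rewrite (compat_a a HT HU HS) scalerDr.
by rewrite -scalemxAl -scalemxAr.
Qed.

End Compat.

Section Eig.
Variables (R : realType) (n : nat).
Local Notation V := 'rV[R]_n.
Local Notation M := 'M[R]_n.

Definition sc (A v : V) : R := (A *m v^T) 0 0.
Lemma scD A B v : sc (A + B) v = sc A v + sc B v.
Proof. by rewrite /sc mulmxDl mxE. Qed.
Lemma scN A v : sc (- A) v = - sc A v.
Proof. by rewrite /sc mulNmx mxE. Qed.
Lemma scB A B v : sc (A - B) v = sc A v - sc B v.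
Proof. by rewrite scD scN. Qed.
Lemma scZ a A v : sc (a *: A) v = a * sc A v.
Proof. by rewrite /sc -scalemxAl mxE. Qed.
Lemma sc0 v : sc 0 v = 0.
Proof. by rewrite /sc mul0mx mxE. Qed.
Lemma sc_delta A c : sc A (delta_mx 0 c) = A 0 c.
Proof. by rewrite /sc trmx_delta -colE mxE. Qed.
Lemma sc_row A B : (forall c, sc A (delta_mx 0 c) = sc B (delta_mx 0 c)) -> A = B.
Proof. by move=> H; apply/rowP => c; rewrite -!sc_delta H. Qed.
Lemma scC (A : M) u v : A^T = A -> sc (u *m A) v = sc (v *m A) u.
Proof.
move=> HA; rewrite /sc.
have -> : (u *m A *m v^T) 0 0 = ((u *m A *m v^T)^T) 0 0 by rewrite [RHS]mxE.
by rewrite !trmx_mul trmxK HA mulmxA.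
Qed.

Lemma eig_row (U : set V) g T rho (x : V -> V) q :
  pseudo_riemannian g U -> (T q)^T = T q -> eigvec g T rho x U -> U q ->
  x q *m (T q - rho q *: g q) = 0.
Proof.
move=> HPR HT E Uq; have [HgT HgU] := HPR q Uq.
have e := E q Uq; rewrite /endo in e.
have : x q *m (T q)^T *m (ginv g q)^T *m g q = rho q *: x q *m g q by rewrite e.
rewrite -mulmxA (ginvT HgT) /ginv mulVmx // mulmx1 HT => H.
by rewrite mulmxBr H -scalemxAl -scalemxAr subrr.
Qed.

End Eig.

Section EigD.
Variables (R : realType) (n : nat).
Local Notation V := 'rV[R]_n.
Local Notation M := 'M[R]_n.

Lemma eig_deriv (U : set V) (g T : V -> M) rho (x : V -> V) p k :
  open U -> pseudo_riemannian g U -> (forall q, U q -> (T q)^T = T q) ->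
  diff_tfield g U -> diff_tfield T U -> diff_fun rho U -> diff_vfield x U ->
  eigvec g T rho x U -> U p ->
  dV x k p *m (T p - rho p *: g p)
  + x p *m (dM T k p - partial rho k p *: g p - rho p *: dM g k p) = 0.
Proof.
move=> oU HPR HTs dg dT dr dx E Up.
apply/rowP => j.
have Z : partial (fun q => \sum_i x q 0 i * (T q i j - rho q * g q i j)) k p = 0.
  apply: (partial0_on _ oU Up) => q Uq.
  have /rowP/(_ j) := eig_row HPR (HTs q Uq) E Uq.
  by rewrite !mxE => H; rewrite -[RHS]H; apply: eq_bigr => i _; rewrite !mxE.
have dxi i : dvb (fun q => x q 0 i) k p by apply: dvb_diff (dx i) Up.
have dTi i : dvb (fun q => T q i j) k p by apply: dvb_diff (dT i j) Up.
have dgi i : dvb (fun q => g q i j) k p by apply: dvb_diff (dg i j) Up.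
have dri : dvb rho k p by apply: dvb_diff dr Up.
rewrite partial_sum in Z; last first.
  by move=> i; apply: dvbM => //; apply: dvbB => //; apply: dvbM.
rewrite !mxE -[RHS]Z.
rewrite -big_split /=; apply: eq_bigr => i _.
rewrite partialM //; last by apply: dvbB => //; apply: dvbM.
rewrite partialB //; last by apply: dvbM.
rewrite partialM // !mxE.
by ring.
Qed.

End EigD.

Section Key.
Variables (R : realType) (n : nat).
Local Notation V := 'rV[R]_n.
Local Notation M := 'M[R]_n.

Lemma eig_sum (U : set V) (g T : V -> M) rho (x : V -> V) p u :
  open U -> pseudo_riemannian g U -> (forall q, U q -> (T q)^T = T q) ->
  diff_tfield g U -> diff_tfield T U -> diff_fun rho U -> diff_vfield x U ->
  eigvec g T rho x U -> U p ->
  DV x u p *m (T p - rho p *: g p)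
  + x p *m (DM T u p - Ds rho u p *: g p - rho p *: DM g u p) = 0.
Proof.
move=> oU HPR HTs dg dT dr dx E Up.
have -> : DM T u p - Ds rho u p *: g p - rho p *: DM g u p =
   \sum_k u 0 k *: (dM T k p - partial rho k p *: g p - rho p *: dM g k p).
  rewrite /DM /Ds scaler_suml scaler_sumr -!sumrB; apply: eq_bigr => k _.
  by rewrite !scalerBr !scalerA (mulrC (rho p)).
have H k : u 0 k *: dV x k p *m (T p - rho p *: g p) +
    x p *m (u 0 k *: (dM T k p - partial rho k p *: g p - rho p *: dM g k p)) = 0.
  rewrite -scalemxAl -scalemxAr -scalerDr.
  by rewrite (eig_deriv k oU HPR HTs dg dT dr dx E Up) scaler0.
rewrite /DV mulmx_suml mulmx_sumr -big_split big1 //= => k _; exact: H k.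
Qed.

End Key.

Section Key2.
Variables (R : realType) (n : nat).
Local Notation V := 'rV[R]_n.
Local Notation M := 'M[R]_n.

Lemma dsym (U : set V) (F : V -> M) p : open U -> U p ->
  (forall q, U q -> (F q)^T = F q) ->
  forall k i j, partial (fun q => F q i j) k p = partial (fun q => F q j i) k p.
Proof.
move=> oU Up HF k i j; apply: (partial_eq_on _ oU Up) => q Uq.
by rewrite -[in LHS](HF q Uq) mxE.
Qed.

Lemma key_sc (U : set V) (g T : V -> M) rho (x : V -> V) p u v :
  open U -> pseudo_riemannian g U -> (forall q, U q -> (T q)^T = T q) ->
  diff_tfield g U -> diff_tfield T U -> diff_fun rho U -> diff_vfield x U ->
  eigvec g T rho x U -> U p ->
  sc ((DV x u p + x p *m Gm g u p) *m (T p - rho p *: g p)) v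
  + sc (x p *m NT g T u p) v - Ds rho u p * sc (x p *m g p) v = 0.
Proof.
move=> oU HPR HTs dg dT dr dx E Up.
have [HgT HgU] := HPR p Up.
have S := eig_sum u oU HPR HTs dg dT dr dx E Up.
rewrite (compat u HgT HgU (dsym oU Up (fun q Uq => (HPR q Uq).1))) in S.
have xA := eig_row HPR (HTs p Up) E Up.
have xT : x p *m T p = rho p *: (x p *m g p).
  by apply/eqP; rewrite -subr_eq0 scalemxAr -mulmxBr xA.
move: S => /(congr1 (fun M => sc M v)); rewrite NT_eq sc0.
rewrite !(mulmxDl, mulmxDr, mulmxN, mulNmx, scalerDr, scalerN, mulmxA).
rewrite -?scalemxAl -?scalemxAr ?xT -?scalemxAl.
rewrite !(scD, scB, scN, scZ).
move=> H; rewrite !mulmxA in H; lra.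
Qed.

End Key2.

Section Core.
Variables (R : realType) (n : nat).
Local Notation V := 'rV[R]_n.
Local Notation M := 'M[R]_n.

Lemma core1 (G T : M) (rho : R) (x y tv : V) (NTu : V -> M) (Cx Cy : V -> V)
  (dr : V -> R) w :
  G^T = G -> T^T = T ->
  x *m (T - rho *: G) = 0 -> y *m (T - rho *: G) = 0 ->
  (forall u v, sc (Cx u *m (T - rho *: G)) v + sc (x *m NTu u) v
               - dr u * sc (x *m G) v = 0) ->
  (forall u v, sc (Cy u *m (T - rho *: G)) v + sc (y *m NTu u) v
               - dr u * sc (y *m G) v = 0) ->
  (forall u v w, sc (v *m NTu u) w = sc (w *m NTu u) v) ->
  (forall u v w, sc (v *m NTu u) w + sc (w *m NTu v) u + sc (u *m NTu w) v
     = sc (u *m G) v * sc tv w + sc (v *m G) w * sc tv u + sc (w *m G) u * sc tv v) ->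
  sc ((Cx y + Cy x) *m (T - rho *: G)) w
  = sc (x *m G) y * (dr w - sc tv w) + (dr x - sc tv x) * sc (y *m G) w
    + (dr y - sc tv y) * sc (x *m G) w.
Proof.
move=> HG HT xA yA Kx Ky Ns HK.
have AT : (T - rho *: G)^T = T - rho *: G.
  by rewrite linearB /= trZ HG HT.
have e1 := Ky x w. have e2 := Kx y w. have e3 := HK x y w.
have e4 := Ns y x w. have e5 := Ky w x. have e6 := Ns w x y.
have e7 : sc (Cy w *m (T - rho *: G)) x = 0 by rewrite (scC _ _ AT) xA /sc !mul0mx mxE.
have e8 := scC x y HG. have e9 := scC w x HG. have e10 := scC w y HG.
rewrite -e8 in e5; rewrite e9 in e3.
rewrite mulmxDl scD; lra.
Qed.

End Core.

Section Core2.
Variables (R : realType) (n : nat).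
Local Notation V := 'rV[R]_n.
Local Notation M := 'M[R]_n.

Lemma scDr (A v w : V) : sc A (v + w) = sc A v + sc A w.
Proof. by rewrite /sc linearD /= mulmxDr mxE. Qed.

Lemma eigT (T G : M) (b : V) l : b *m (T - l *: G) = 0 -> b *m T = l *: (b *m G).
Proof. by move=> H; apply/eqP; rewrite -subr_eq0 scalemxAr -mulmxBr H. Qed.

Lemma symA (T G : M) l : T^T = T -> G^T = G -> (T - l *: G)^T = T - l *: G.
Proof. by move=> HT HG; rewrite linearB /= trZ HG HT. Qed.

Lemma scA_eig (T G : M) (b w : V) lb lc : T^T = T -> G^T = G ->
  b *m (T - lb *: G) = 0 -> sc (w *m (T - lc *: G)) b = (lb - lc) * sc (b *m G) w.
Proof.
move=> HT HG Hb; rewrite (scC _ _ (symA lc HT HG)) mulmxBr (eigT Hb) -scalemxAr.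
by rewrite scB !scZ mulrBl.
Qed.

Lemma orth (T G : M) (b c : V) lb lc : T^T = T -> G^T = G -> lb != lc ->
  b *m (T - lb *: G) = 0 -> c *m (T - lc *: G) = 0 -> sc (b *m G) c = 0.
Proof.
move=> HT HG ne Hb Hc.
have e1 : sc (b *m T) c = lb * sc (b *m G) c by rewrite (eigT Hb) scZ.
have e2 : sc (b *m T) c = lc * sc (b *m G) c by rewrite (scC _ _ HT) (eigT Hc) scZ (scC _ _ HG).
have : (lb - lc) * sc (b *m G) c = 0 by rewrite mulrBl -e1 -e2 subrr.
by move/eqP; rewrite mulf_eq0 subr_eq0 (negbTE ne) /= => /eqP.
Qed.

Lemma cancel_ne (a b X Y : R) : a != b -> (a - b) * (X + Y) = 0 -> X = - Y.
Proof.
move=> ne /eqP; rewrite mulf_eq0 subr_eq0 (negbTE ne) /= addr_eq0 => /eqP //.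
Qed.

Lemma core2 (G T : M) (r1 r2 r3 : R) (x y z tv : V) (NTu : V -> M)
  (Cx Cy Cz : V -> V) (d1 d2 d3 : V -> R) :
  G^T = G -> T^T = T -> r1 != r2 -> r2 != r3 -> r1 != r3 ->
  x *m (T - r1 *: G) = 0 -> y *m (T - r2 *: G) = 0 -> z *m (T - r3 *: G) = 0 ->
  (forall u v, sc (Cx u *m (T - r1 *: G)) v + sc (x *m NTu u) v
               - d1 u * sc (x *m G) v = 0) ->
  (forall u v, sc (Cy u *m (T - r2 *: G)) v + sc (y *m NTu u) v
               - d2 u * sc (y *m G) v = 0) ->
  (forall u v, sc (Cz u *m (T - r3 *: G)) v + sc (z *m NTu u) v
               - d3 u * sc (z *m G) v = 0) ->
  (forall u v w, sc (v *m NTu u) w = sc (w *m NTu u) v) ->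
  (forall u v w, sc (v *m NTu u) w + sc (w *m NTu v) u + sc (u *m NTu w) v
     = sc (u *m G) v * sc tv w + sc (v *m G) w * sc tv u + sc (w *m G) u * sc tv v) ->
  sc (x *m T) (Cz y + Cy z) + sc (z *m T) (Cy x + Cx y)
  + sc (y *m T) (Cx z + Cz x) = 0.
Proof.
move=> HG HT n12 n23 n13 xA yA zA Kx Ky Kz Ns HK.
have n21 : r2 != r1 by rewrite eq_sym.
have n32 : r3 != r2 by rewrite eq_sym.
have n31 : r3 != r1 by rewrite eq_sym.
have gxy := orth HT HG n12 xA yA. have gyx := orth HT HG n21 yA xA.
have gyz := orth HT HG n23 yA zA. have gzy := orth HT HG n32 zA yA.
have gxz := orth HT HG n13 xA zA. have gzx := orth HT HG n31 zA xA.
have k1 := Kx z y. have k2 := Ky z x. have s1 := Ns z x y.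
have k3 := Kx y z. have k4 := Kz y x. have s2 := Ns y x z.
have k5 := Ky x z. have k6 := Kz x y. have s3 := Ns x y z.
have h := HK x y z.
rewrite gxy gyz gzx !mul0r !addr0 in h.
rewrite gxy in k1. rewrite gyx in k2. rewrite gxz in k3. rewrite gzx in k4.
rewrite gyz in k5. rewrite gzy in k6.
rewrite (scA_eig _ _ HT HG yA) in k1. rewrite (scA_eig _ _ HT HG xA) in k2.
rewrite (scA_eig _ _ HT HG zA) in k3. rewrite (scA_eig _ _ HT HG xA) in k4.
rewrite (scA_eig _ _ HT HG zA) in k5. rewrite (scA_eig _ _ HT HG yA) in k6.
rewrite !mulr0 !subr0 in k1 k2 k3 k4 k5 k6.
have e1 : (r1 - r2) * (sc (x *m G) (Cy z) + sc (y *m G) (Cx z)) = 0 by lra.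
have e2 : (r1 - r3) * (sc (z *m G) (Cx y) + sc (x *m G) (Cz y)) = 0 by lra.
have e3 : (r2 - r3) * (sc (z *m G) (Cy x) + sc (y *m G) (Cz x)) = 0 by lra.
have f1 := cancel_ne n12 e1. have f2 := cancel_ne n13 e2. have f3 := cancel_ne n23 e3.
rewrite (eigT xA) (eigT yA) (eigT zA) !scZ !scDr f1 f2 f3.
rewrite f1 in k2. rewrite f2 in k3. rewrite f3 in k5.
lra.
Qed.

End Core2.

Section Tri.
Variables (R : realType) (n : nat).
Local Notation V := 'rV[R]_n.
Local Notation M := 'M[R]_n.

Definition tri (N : 'I_n -> 'I_n -> 'I_n -> R) (u v w : V) : R :=
  \sum_a \sum_b \sum_c u 0 a * v 0 b * w 0 c * N a b c.

Lemma sc_sum m (F : 'I_m -> V) w : sc (\sum_i F i) w = \sum_i sc (F i) w.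
Proof. by rewrite /sc mulmx_suml summxE. Qed.

Lemma sc_NT (g T : V -> M) p u v w :
  sc (v *m NT g T u p) w = tri (nablaT g T p) u v w.
Proof.
rewrite /NT mulmx_sumr sc_sum /tri; apply: eq_bigr => a _.
rewrite -scalemxAr scZ.
rewrite (_ : sc (v *m NTa g T a p) w = bform (NTa g T a p) v w) // bformE mulr_sumr.
apply: eq_bigr => b _; rewrite mulr_sumr; apply: eq_bigr => c _; rewrite mxE. ring.
Qed.

Lemma tri_ext N N' u v w : (forall a b c, N a b c = N' a b c) -> tri N u v w = tri N' u v w.
Proof.
move=> H; apply: eq_bigr => a _; apply: eq_bigr => b _; apply: eq_bigr => c _.
by rewrite H.
Qed.

Lemma tri_add N1 N2 u v w :
  tri (fun a b c => N1 a b c + N2 a b c) u v w = tri N1 u v w + tri N2 u v w.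
Proof.
rewrite /tri -big_split; apply: eq_bigr => a _; rewrite -big_split.
apply: eq_bigr => b _; rewrite -big_split; apply: eq_bigr => c _ /=; ring.
Qed.

Lemma tri_rot N u v w : tri (fun a b c => N b c a) u v w = tri N v w u.
Proof.
rewrite /tri exchange_big /=; apply: eq_bigr => b _; rewrite exchange_big /=.
apply: eq_bigr => c _; apply: eq_bigr => a _; ring.
Qed.

Lemma tri_cyc N u v w :
  tri (fun a b c => N a b c + N b c a + N c a b) u v w
  = tri N u v w + tri N v w u + tri N w u v.
Proof.
have r1 : tri (fun a b c => N b c a) u v w = tri N v w u by exact: tri_rot.
have r2 : tri (fun a b c => N c a b) u v w = tri N w u v.
  rewrite -(tri_rot N v w u); exact: (tri_rot (fun a b c => N b c a) u v w).
by rewrite !tri_add r1 r2.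
Qed.

Lemma tri_one (G : M) (t : V) u v w :
  tri (fun a b c => G a b * t 0 c) u v w = sc (u *m G) v * sc t w.
Proof.
rewrite (_ : sc (u *m G) v = bform G u v) // bformE.
rewrite (_ : sc t w = \sum_c t 0 c * w 0 c); last first.
  by rewrite /sc mxE; apply: eq_bigr => c _; rewrite mxE.
rewrite mulr_suml; apply: eq_bigr => a _; rewrite mulr_suml /=.
apply: eq_bigr => b _; rewrite mulr_sumr /=; apply: eq_bigr => c _; ring.
Qed.

Lemma cyc_sc (g T : V -> M) p (G : M) (t : V) :
  (forall a b c, nablaT g T p a b c + nablaT g T p b c a + nablaT g T p c a b
     = G a b * t 0 c + G b c * t 0 a + G c a * t 0 b) ->
  forall u v w, sc (v *m NT g T u p) w + sc (w *m NT g T v p) u + sc (u *m NT g T w p) v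
     = sc (u *m G) v * sc t w + sc (v *m G) w * sc t u + sc (w *m G) u * sc t v.
Proof.
move=> Hc u v w; rewrite !sc_NT -tri_cyc (tri_ext _ _ _ Hc).
have := tri_cyc (fun a b c => G a b * t 0 c) u v w; rewrite !tri_one => <-.
by apply: tri_ext => a b c.
Qed.

End Tri.

Section Main.
Variables (R : realType) (n : nat).
Local Notation V := 'rV[R]_n.
Local Notation M := 'M[R]_n.

Lemma Nsym (U : set V) (g T : V -> M) p : open U -> U p ->
  (g p)^T = g p -> (forall q, U q -> (T q)^T = T q) ->
  forall u v w, sc (v *m NT g T u p) w = sc (w *m NT g T u p) v.
Proof.
move=> oU Up HgT HTs u v w; apply: scC.
have DMs : (DM T u p)^T = DM T u p.
  rewrite /DM trmx_sumZ; apply: eq_bigr => k _; congr (_ *: _).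
  by apply/matrixP => i j; rewrite !mxE (dsym oU Up HTs).
rewrite NT_eq !linearB /= !trmx_mul trmxK (HTs p Up) DMs.
by rewrite addrAC.
Qed.

Lemma sc_drho (rho : V -> R) p w : sc (drho rho p) w = Ds rho w p.
Proof. by rewrite /sc /Ds mxE; apply: eq_bigr => k _; rewrite !mxE mulrC. Qed.

Lemma main_given (U : set V) (g T : V -> M) (tf : V -> V) :
  open U -> pseudo_riemannian g U -> diff_tfield g U -> diff_tfield T U ->
  (forall q, U q -> (T q)^T = T q) ->
  (forall q, U q -> forall a b c,
      nablaT g T q a b c + nablaT g T q b c a + nablaT g T q c a b
      = g q a b * tf q 0 c + g q b c * tf q 0 a + g q c a * tf q 0 b) ->
  (forall (rho : V -> R) (x y : V -> V),
     diff_fun rho U -> diff_vfield x U -> diff_vfield y U ->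
     eigvec g T rho x U -> eigvec g T rho y U ->
     forall p, U p ->
       let s := drho rho p - tf p in
       sbracket g x y p *m (T p - rho p *: g p)
       = bform (g p) (x p) (y p) *: s
         + bform (g p) (s *m (ginv g p)^T) (x p) *: (y p *m g p)
         + bform (g p) (s *m (ginv g p)^T) (y p) *: (x p *m g p))
  /\
  (forall (r1 r2 r3 : V -> R) (x y z : V -> V),
     diff_fun r1 U -> diff_fun r2 U -> diff_fun r3 U ->
     diff_vfield x U -> diff_vfield y U -> diff_vfield z U ->
     eigvec g T r1 x U -> eigvec g T r2 y U -> eigvec g T r3 z U ->
     (forall p, U p -> [/\ r1 p != r2 p, r2 p != r3 p & r1 p != r3 p]) ->
     forall p, U p ->
       bform (T p) (x p) (sbracket g y z p)
       + bform (T p) (z p) (sbracket g x y p)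
       + bform (T p) (y p) (sbracket g z x p) = 0).
Proof.
move=> oU HPR dg dT HTs Hc; split.
  move=> rho x y dr dx dy Ex Ey p Up s.
  have [HgT HgU] := HPR p Up.
  rewrite /sbracket !cov_eq; apply: sc_row => c.
  have := core1 (tv := tf p) (NTu := fun u => NT g T u p)
    (Cx := fun u => DV x u p + x p *m Gm g u p)
    (Cy := fun u => DV y u p + y p *m Gm g u p) (dr := fun u => Ds rho u p)
    (delta_mx 0 c) HgT (HTs p Up) (eig_row HPR (HTs p Up) Ex Up) (eig_row HPR (HTs p Up) Ey Up)
    (fun u v => key_sc u v oU HPR HTs dg dT dr dx Ex Up)
    (fun u v => key_sc u v oU HPR HTs dg dT dr dy Ey Up)
    (Nsym oU Up HgT HTs) (cyc_sc (Hc p Up)).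
  rewrite /= addrC => ->.
  have Hs w : bform (g p) (s *m (ginv g p)^T) w = sc s w.
    by rewrite /bform -(mulmxA s) (ginvT HgT) /ginv mulVmx // mulmx1.
  rewrite Hs Hs !scD !scZ /s !scB !sc_drho.
  rewrite (_ : bform (g p) (x p) (y p) = sc (x p *m g p) (y p)) //.
  rewrite !scN; lra.
move=> r1 r2 r3 x y z d1 d2 d3 dx dy dz Ex Ey Ez Hne p Up.
have [HgT HgU] := HPR p Up.
have [n12 n23 n13] := Hne p Up.
rewrite /sbracket !cov_eq.
have := core2 (tv := tf p) (NTu := fun u => NT g T u p)
    (Cx := fun u => DV x u p + x p *m Gm g u p)
    (Cy := fun u => DV y u p + y p *m Gm g u p)
    (Cz := fun u => DV z u p + z p *m Gm g u p)
    (d1 := fun u => Ds r1 u p) (d2 := fun u => Ds r2 u p) (d3 := fun u => Ds r3 u p)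
    HgT (HTs p Up) n12 n23 n13
    (eig_row HPR (HTs p Up) Ex Up) (eig_row HPR (HTs p Up) Ey Up)
    (eig_row HPR (HTs p Up) Ez Up)
    (fun u v => key_sc u v oU HPR HTs dg dT d1 dx Ex Up)
    (fun u v => key_sc u v oU HPR HTs dg dT d2 dy Ey Up)
    (fun u v => key_sc u v oU HPR HTs dg dT d3 dz Ez Up)
    (Nsym oU Up HgT HTs) (cyc_sc (Hc p Up)).
by [].
Qed.

End Main.

Section Inv.
Variables (R : realType) (n : nat).
Local Notation V := 'rV[R]_n.
Local Notation M := 'M[R]_n.

Lemma dvb_ginv (U : set V) (g : V -> M) p k i j :
  open U -> pseudo_riemannian g U -> diff_tfield g U -> U p ->
  dvb (fun q => ginv g q i j) k p.
Proof.
move=> oU HPR dg Up.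
have dgij a b : dvb (fun q => g q a b) k p by apply: dvb_diff (dg a b) Up.
have D : dvb (fun q => (\det (g q))^-1 * \adj (g q) i j) k p.
  apply: dvbM.
    apply: dvbV; first by have [_ ] := HPR p Up; rewrite unitmxE unitfE.
    by apply: derivable_det => a b; exact: dgij.
  have -> : (fun q => \adj (g q) i j) =
    (fun q => (-1) ^+ (j + i) * \det (row' j (col' i (g q)))).
    by apply: funext => q; rewrite mxE.
  apply: derivable_mulc; apply: derivable_det => a b.
  have -> : (fun q => row' j (col' i (g q)) a b) = (fun q => g q (lift j a) (lift i b)).
    by apply: funext => q; rewrite !mxE.
  exact: dgij.
apply: (near_eq_derivable _ D).
near=> q.
have Uq : U q by near: q; exact: nearU oU Up.
have [_ HU] := HPR q Uq.
by rewrite /ginv /invmx HU [RHS]mxE.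
Unshelve. all: by end_near.
Qed.

End Inv.

Section Inv2.
Variables (R : realType) (n : nat).
Local Notation V := 'rV[R]_n.
Local Notation M := 'M[R]_n.

Lemma dginv (U : set V) (g : V -> M) p k :
  open U -> pseudo_riemannian g U -> diff_tfield g U -> U p ->
  dM (ginv g) k p = - (ginv g p *m dM g k p *m ginv g p).
Proof.
move=> oU HPR dg Up; have [HgT HgU] := HPR p Up.
have E : g p *m dM (ginv g) k p + dM g k p *m ginv g p = 0.
  apply/matrixP => a c.
  have Z : partial (fun q => \sum_b g q a b * ginv g q b c) k p = 0.
    rewrite (@partial_eq_on _ _ U _ (fun _ => (1%:M : M) a c) k p oU Up).
      exact: partial_cst.
    move=> q Uq; have [_ HU] := HPR q Uq.
    by rewrite -(mulmxV HU) mxE.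
  rewrite partial_sum in Z; last first.
    by move=> b; apply: dvbM; [exact: dvb_diff (dg a b) Up | exact: dvb_ginv oU HPR dg Up].
  rewrite !mxE -[RHS]Z -big_split /=; apply: eq_bigr => b _.
  rewrite partialM; [|exact: dvb_diff (dg a b) Up | exact: dvb_ginv oU HPR dg Up].
  by rewrite !mxE; ring.
have E' : g p *m dM (ginv g) k p = - (dM g k p *m ginv g p).
  by apply/eqP; rewrite -subr_eq0 opprK E.
rewrite -[LHS]mul1mx -(mulVmx HgU) -[LHS]mulmxA -/(ginv g p) E' mulmxN mulmxA.
by [].
Qed.

Lemma ip_tr (X Y : M) : \sum_a \sum_b X a b * Y a b = \tr (X *m Y^T).
Proof.
rewrite /mxtrace; apply: eq_bigr => a _; rewrite mxE.
by apply: eq_bigr => b _; rewrite !mxE.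
Qed.

Lemma trace_nabla (U : set V) (g T : V -> M) p c :
  open U -> pseudo_riemannian g U -> diff_tfield g U -> diff_tfield T U -> U p ->
  (forall q, U q -> (T q)^T = T q) ->
  (forall q, U q -> \sum_(a < n) \sum_(b < n) ginv g q a b * T q a b = 0) ->
  \sum_a \sum_b ginv g p a b * nablaT g T p c a b = 0.
Proof.
move=> oU HPR dg dT Up HTs Htr; have [HgT HgU] := HPR p Up.
have Z : partial (fun q => \sum_a \sum_b ginv g q a b * T q a b) c p = 0.
  exact: (partial0_on _ oU Up).
have dGi a b : dvb (fun q => ginv g q a b) c p by exact: dvb_ginv oU HPR dg Up.
have dTab a b : dvb (fun q => T q a b) c p by exact: dvb_diff (dT a b) Up.
rewrite partial_sum in Z; last first.
  by move=> a; apply: dvb_sum => b; apply: dvbM.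
have Z2 : \sum_a \sum_b (ginv g p a b * dM T c p a b + T p a b * dM (ginv g) c p a b) = 0.
  rewrite -[RHS]Z; apply: eq_bigr => a _.
  rewrite partial_sum; last by move=> b; apply: dvbM.
  by apply: eq_bigr => b _; rewrite partialM // !mxE.
have -> : \sum_a \sum_b ginv g p a b * nablaT g T p c a b
        = \sum_a \sum_b ginv g p a b * NTa g T c p a b.
  by apply: eq_bigr => a _; apply: eq_bigr => b _; rewrite mxE.
move: Z2; under eq_bigr do rewrite big_split /=.
rewrite big_split /= (ip_tr (ginv g p)) (eq_bigr (fun a => \sum_b dM (ginv g) c p a b * T p a b)); last first.
  by move=> a _; apply: eq_bigr => b _; rewrite mulrC.
rewrite ip_tr ip_tr NTa_eq (dginv _ oU HPR dg Up).
rewrite (compat_a c HgT HgU (dsym oU Up (fun q Uq => (HPR q Uq).1))).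
set Gi := ginv g p; set Ga := Gma g c p.
have H1 : Gi *m g p = 1%:M by rewrite /Gi /ginv mulVmx.
have H2 : g p *m Gi = 1%:M by rewrite /Gi /ginv mulmxV.
have e1 : Gi *m (Ga *m g p + g p *m Ga^T) *m Gi = Gi *m Ga + Ga^T *m Gi.
  rewrite mulmxDr mulmxDl -!mulmxA H2 mulmx1 !mulmxA H1 mul1mx.
  by [].
rewrite e1 (HTs p Up) !linearB /= !trmx_mul trmxK (HTs p Up).
rewrite !(mulmxDl, mulmxDr, mulmxN, mulNmx, mulmxA) !(mxtraceD, raddfN) /=.
have c1 : \tr (Ga^T *m Gi *m T p) = \tr (Gi *m T p *m Ga^T).
  by rewrite -mulmxA mxtrace_mulC.
move=> H; rewrite mxtraceD c1 in H; lra.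
Qed.

End Inv2.

Section Conf.
Variables (R : realType) (n : nat).
Local Notation V := 'rV[R]_n.
Local Notation M := 'M[R]_n.

Lemma NTa_sym (U : set V) (g T : V -> M) a p : open U -> U p ->
  (forall q, U q -> (T q)^T = T q) -> (NTa g T a p)^T = NTa g T a p.
Proof.
move=> oU Up HTs.
have DMs : (dM T a p)^T = dM T a p.
  by apply/matrixP => i j; rewrite !mxE (dsym oU Up HTs).
rewrite NTa_eq !linearB /= !trmx_mul trmxK (HTs p Up) DMs.
by rewrite addrAC.
Qed.

Lemma conf_t (U : set V) (g T : V -> M) (tp : V) p :
  open U -> pseudo_riemannian g U -> diff_tfield g U -> diff_tfield T U -> U p ->
  (forall q, U q -> (T q)^T = T q) ->
  (forall q, U q -> \sum_(a < n) \sum_(b < n) ginv g q a b * T q a b = 0) ->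
  (forall a b c, nablaT g T p a b c + nablaT g T p b c a + nablaT g T p c a b
     = g p a b * tp 0 c + g p b c * tp 0 a + g p c a * tp 0 b) ->
  tp = (2 / (n + 2)%:R) *: divT g T p.
Proof.
move=> oU HPR dg dT Up HTs Htr Hc.
have [HgT HgU] := HPR p Up.
set N := nablaT g T p; set Gi := ginv g p; set G := g p.
have H1 : Gi *m G = 1%:M by rewrite /Gi /ginv mulVmx.
have H2 : G *m Gi = 1%:M by rewrite /Gi /ginv mulmxV.
have GiT : Gi^T = Gi by rewrite /Gi ginvT.
have Nsy a b c : N a b c = N a c b.
  have := congr1 (fun M0 : 'M[R]_n => M0 b c) (@NTa_sym U g T a p oU Up HTs).
  by rewrite !mxE /N => ->.
have Gis a b : Gi a b = Gi b a by rewrite -[in LHS]GiT mxE.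
apply/rowP => c; rewrite !mxE.
set dc := \sum_a \sum_c0 Gi a c0 * N c0 a c.
have HS : \sum_a \sum_b Gi a b * (N a b c + N b c a + N c a b)
        = \sum_a \sum_b Gi a b * (G a b * tp 0 c + G b c * tp 0 a + G c a * tp 0 b).
  by apply: eq_bigr => a _; apply: eq_bigr => b _; rewrite Hc.
have L : \sum_a \sum_b Gi a b * (N a b c + N b c a + N c a b)
   = \sum_a \sum_b Gi a b * N a b c + \sum_a \sum_b Gi a b * N b c a
     + \sum_a \sum_b Gi a b * N c a b.
  rewrite -!big_split; apply: eq_bigr => a _; rewrite -!big_split.
  by apply: eq_bigr => b _ /=; ring.
have L1 : \sum_a \sum_b Gi a b * N a b c = dc.
  rewrite exchange_big; apply: eq_bigr => a _; apply: eq_bigr => b _ /=.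
  by rewrite Gis.
have L2 : \sum_a \sum_b Gi a b * N b c a = dc.
  by apply: eq_bigr => a _; apply: eq_bigr => b _; rewrite Nsy.
have L3 : \sum_a \sum_b Gi a b * N c a b = 0.
  exact: (trace_nabla c oU HPR dg dT Up HTs Htr).
have R1 : \sum_a \sum_b Gi a b * (G a b * tp 0 c) = n%:R * tp 0 c.
  have T1 : \sum_a \sum_b Gi a b * G a b = n%:R by rewrite ip_tr HgT H1 mxtrace1.
  rewrite -T1 mulr_suml; apply: eq_bigr => a _.
  by rewrite mulr_suml; apply: eq_bigr => b _; ring.
have R2 : \sum_a \sum_b Gi a b * (G b c * tp 0 a) = tp 0 c.
  rewrite -[RHS](congr1 (fun M0 : 'rV[R]_n => M0 0 c) (mulmx1 tp)) -H1 mxE.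
  apply: eq_bigr => a _; rewrite mxE mulr_sumr; apply: eq_bigr => b _; ring.
have R3 : \sum_a \sum_b Gi a b * (G c a * tp 0 b) = tp 0 c.
  rewrite -[RHS](congr1 (fun M0 : 'rV[R]_n => M0 0 c) (mulmx1 tp)) -trmx1 -H2 mxE.
  rewrite exchange_big; apply: eq_bigr => b _; rewrite !mxE mulr_sumr.
  by apply: eq_bigr => a _ /=; ring.
have RS : \sum_a \sum_b Gi a b * (G a b * tp 0 c + G b c * tp 0 a + G c a * tp 0 b)
   = \sum_a \sum_b Gi a b * (G a b * tp 0 c) + \sum_a \sum_b Gi a b * (G b c * tp 0 a)
     + \sum_a \sum_b Gi a b * (G c a * tp 0 b).
  rewrite -!big_split; apply: eq_bigr => a _; rewrite -!big_split.
  by apply: eq_bigr => b _ /=; ring.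
rewrite L L1 L2 L3 RS R1 R2 R3 in HS.
have nz : (n + 2)%:R != 0 :> R by rewrite pnatr_eq0 addn2.
have E : dc = (n + 2)%:R * tp 0 c / 2.
  rewrite natrD; lra.
rewrite E; field; by rewrite -natrD.
Qed.
End Conf.


Unset Implicit Arguments. Set Strict Implicit.

Theorem lemma3 (R : realType) (n : nat) (U : set 'rV[R]_n)
  (g T : 'rV[R]_n -> 'M[R]_n) (conf : bool) :
  open U -> pseudo_riemannian g U -> diff_tfield g U -> diff_tfield T U ->
  (if conf then conformal_tensor g T U else killing_tensor g T U) ->
  let t : 'rV[R]_n -> 'rV[R]_n :=
    if conf then fun p => (2 / (n + 2)%:R) *: divT g T p else fun _ => 0 in
  (forall (rho : 'rV[R]_n -> R) (x y : 'rV[R]_n -> 'rV[R]_n),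
     diff_fun rho U -> diff_vfield x U -> diff_vfield y U ->
     eigvec g T rho x U -> eigvec g T rho y U ->
     forall p, U p ->
       let s := drho rho p - t p in
       sbracket g x y p *m (T p - rho p *: g p)
       = bform (g p) (x p) (y p) *: s
         + bform (g p) (s *m (ginv g p)^T) (x p) *: (y p *m g p)
         + bform (g p) (s *m (ginv g p)^T) (y p) *: (x p *m g p))
  /\
  (forall (r1 r2 r3 : 'rV[R]_n -> R) (x y z : 'rV[R]_n -> 'rV[R]_n),
     diff_fun r1 U -> diff_fun r2 U -> diff_fun r3 U ->
     diff_vfield x U -> diff_vfield y U -> diff_vfield z U ->
     eigvec g T r1 x U -> eigvec g T r2 y U -> eigvec g T r3 z U ->
     (forall p, U p -> [/\ r1 p != r2 p, r2 p != r3 p & r1 p != r3 p]) ->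
     forall p, U p ->
       bform (T p) (x p) (sbracket g y z p)
       + bform (T p) (z p) (sbracket g x y p)
       + bform (T p) (y p) (sbracket g z x p) = 0).
Proof.
move=> oU HPR dg dT.
case: conf => Htens /=.
  case: Htens => t' Ht'.
  have HTs : forall q, U q -> (T q)^T = T q by move=> q Uq; case: (Ht' q Uq).
  have Htr : forall q, U q -> \sum_(a < n) \sum_(b < n) ginv g q a b * T q a b = 0.
    by move=> q Uq; case: (Ht' q Uq) => _ [].
  apply: (main_given (tf := fun p => (2 / (n + 2)%:R) *: divT g T p)) => // q Uq.
  have [_ [_ Hc]] := Ht' q Uq.
  by rewrite -(conf_t oU HPR dg dT Uq HTs Htr Hc).
have HTs : forall q, U q -> (T q)^T = T q by move=> q Uq; case: (Htens q Uq).
apply: (main_given (tf := fun _ => 0)) => // q Uq a b c.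
by rewrite (Htens q Uq).2 !mxE; ring.
Qed.
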